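(* Let $d\in\mathbb N$, $\alpha>0$, $\varepsilon>0$, and let $\mathcal A=\{a_1,\dots,a_m\}\subseteq(\mathbb Z^d)^*$ be a set of primitive vectors that positively span the linear space they generate (i.e., there are $\lambda_1,\dots,\lambda_m\ge0$, not all $0$, with $\sum\lambda_ia_i=0$). Let $\mathcal N(d,\alpha,\mathcal A)$ be the set of $d$-dimensional lattice polytopes $P$ with $\alpha$-canonical normal fan and $\mathcal N_{\mathrm{core}}(P)=\mathcal A$. Then \[ \{\operatorname{qcd}(P)\mid P\in\mathcal N(d,\alpha,\mathcal A),\ \operatorname{qcd}(P)\ge\varepsilon\} \] is finite.
   Context: A $d$-dimensional lattice polytope is written $P=\{x\in\mathbb R^d\mid \langle a_i,x\rangle\le b_i,\ 1\le i\le n\}$ with an irredundant system and primitive $a_i\in(\mathbb Z^d)^*$. For rational $c>0$, $P^{(c)}=\{x\mid \langle a_i,x\rangle\le b_i-c\ \forall i\}$; $\operatorname{qcd}(P)^{-1}=\max\{c>0\mid P^{(c)}\ne\emptyset\}$; with $c_0=\operatorname{qcd}(P)^{-1}$, $\operatorname{core}P=P^{(c_0)}$, and $\mathcal N_{\mathrm{core}}(P)$ is the set of those $a_i$ with $\langle a_i,y\rangle=b_i-c_0$ for all $y\in\operatorname{core}P$. The normal fan of $P$ is the complete fan whose cones are $\operatorname{cone}(a_i\mid i\in I)$ with $I$ the set of facets containing a given face. For a rational polyhedral cone $\sigma$ with primitive ray generators $a_1,\dots,a_k$, the height of $y\in\sigma$ is $\max\{\sum\lambda_i\mid y=\sum\lambda_ia_i,\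 \lambda_i\ge0\}$; $\sigma$ is $\alpha$-canonical if every nonzero $y\in\sigma\cap(\mathbb Z^d)^*$ has height at least $\alpha$; a fan is $\alpha$-canonical if all its cones are. *)

(* Defs.v *)
(* Points of R^d are row vectors 'rV[R]_d over an
   Archimedean real field R; dual lattice vectors are 'rV[int]_d. *)
From HB Require Import structures.
From mathcomp Require Import all_boot all_order all_algebra.
Set Implicit Arguments. Unset Strict Implicit. Unset Printing Implicit Defensive.
Import Order.TTheory GRing.Theory Num.Theory.
Local Open Scope ring_scope.

Section PolyDefs.
Variables (R : archiRealFieldType) (d : nat).

Definition intvec (v : 'rV[int]_d) : 'rV[R]_d := map_mx (fun z : int => z%:~R) v.

Definition dotZ (a : 'rV[int]_d) (x : 'rV[R]_d) : R :=
  \sum_(j < d) (a 0 j)%:~R * x 0 j.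

Definition dotR (w x : 'rV[R]_d) : R := \sum_(j < d) w 0 j * x 0 j.

Definition primitive (a : 'rV[int]_d) : Prop :=
  forall k : int, (forall j, (k %| a ord0 j)%Z) -> (k %| 1)%Z.

Variables (n : nat) (a : 'I_n -> 'rV[int]_d) (b : 'I_n -> R).

Definition Pc (c : R) (x : 'rV[R]_d) : Prop := forall i, dotZ (a i) x <= b i - c.
Definition Ppoly (x : 'rV[R]_d) : Prop := Pc 0 x.

Definition irredundant : Prop :=
  forall i, exists x, (forall j, j != i -> dotZ (a j) x <= b j) /\ b i < dotZ (a i) x.

Definition full_dimensional : Prop := exists x, forall i, dotZ (a i) x < b i.

Definition bounded : Prop :=
  exists M : R, forall x, Ppoly x -> forall j, `|x 0 j| <= M.

(* P is the convex hull of its lattice points *)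
Definition lattice_hull : Prop :=
  forall x, Ppoly x -> exists k (p : 'I_k -> 'rV[int]_d) (lam : 'I_k -> R),
    [/\ forall t, 0 <= lam t, \sum_t lam t = 1,
        forall t, Ppoly (intvec (p t)) & x = \sum_t lam t *: intvec (p t)].

Definition lattice_polytope_system : Prop :=
  [/\ forall i, primitive (a i), irredundant, full_dimensional, bounded & lattice_hull].

(* c0 = qcd(P)^{-1} = max { c > 0 | P^(c) nonempty } *)
Definition qcd_inv (c0 : R) : Prop :=
  [/\ 0 < c0, exists y, Pc c0 y & forall c, 0 < c -> (exists y, Pc c y) -> c <= c0].

(* v lies in N_core(P), where c0 = qcd(P)^{-1} and core P = P^(c0) *)
Definition in_Ncore (c0 : R) (v : 'rV[int]_d) : Prop :=
  exists i, a i = v /\ forall y, Pc c0 y -> dotZ (a i) y = b i - c0.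

Definition cone_comb (I : 'I_n -> Prop) (lam : 'I_n -> R) (y : 'rV[int]_d) : Prop :=
  [/\ forall i, 0 <= lam i, forall i, ~ I i -> lam i = 0
    & intvec y = \sum_i lam i *: intvec (a i)].

(* cone(a_i | i in I) is alpha-canonical: every nonzero lattice point of it
   has height (max of sum lam_i over representations) at least alpha *)
Definition alpha_canonical_cone (alpha : R) (I : 'I_n -> Prop) : Prop :=
  forall y : 'rV[int]_d, y != 0 -> (exists lam, cone_comb I lam y) ->
    exists lam, cone_comb I lam y /\ alpha <= \sum_i lam i.

Definition face_pt (w y : 'rV[R]_d) : Prop :=
  Ppoly y /\ forall z, Ppoly z -> dotR w z <= dotR w y.

Definition facets_of (w : 'rV[R]_d) (i : 'I_n) : Prop :=
  forall y, face_pt w y -> dotZ (a i) y = b i.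

(* the normal fan: cones cone(a_i | i in I_F) over nonempty faces F *)
Definition alpha_canonical_fan (alpha : R) : Prop :=
  forall w, (exists y, face_pt w y) -> alpha_canonical_cone alpha (facets_of w).

End PolyDefs.

(* Main.v *)
Require Import Defs.
From HB Require Import structures.
From mathcomp Require Import all_boot all_order all_algebra.
From mathcomp Require Import lra ring.
Import Order.TTheory GRing.Theory Num.Theory.
Local Open Scope ring_scope.

Lemma dotZ_lin (R : archiRealFieldType) d (a : 'rV[int]_d) (u v : R) x y :
  dotZ a (u *: x + v *: y) = u * dotZ a x + v * dotZ a y.
Proof.
rewrite /dotZ !mulr_sumr -big_split; apply: eq_bigr => j _.
rewrite !mxE /=; ring.
Qed.

Lemma dotZ_sum (R : archiRealFieldType) d (a : 'rV[int]_d) k (c : 'I_k -> R) v :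
  dotZ a (\sum_(t < k) c t *: v t) = \sum_t c t * dotZ a (v t).
Proof.
rewrite /dotZ; under eq_bigr do rewrite summxE mulr_sumr.
rewrite exchange_big; apply: eq_bigr => t _; rewrite mulr_sumr.
apply: eq_bigr => j _; rewrite !mxE /=; ring.
Qed.

Lemma dotZ_int (R : archiRealFieldType) d (a p : 'rV[int]_d) :
  dotZ a (intvec R p) \is a Num.int.
Proof.
rewrite /dotZ; apply: rpred_sum => j _; rewrite mxE.
by apply: rpredM; apply: intr_int.
Qed.

Lemma b_int (R : archiRealFieldType) d n (a : 'I_n -> 'rV[int]_d) (b : 'I_n -> R) :
  lattice_polytope_system a b -> forall j, b j \is a Num.int.
Proof.
case=> _ hirr [x0 hx0] _ hhull j.
have [x1 [hx1 hx1j]] := hirr j.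
have h0 : dotZ (a j) x0 < b j by apply: hx0.
have hd : dotZ (a j) x1 - dotZ (a j) x0 != 0.
  by rewrite subr_eq0 gt_eqF //; apply: lt_trans hx1j.
have hpos : 0 < dotZ (a j) x1 - dotZ (a j) x0 by lra.
set t := (b j - dotZ (a j) x0) / (dotZ (a j) x1 - dotZ (a j) x0).
have ht0 : 0 <= t by apply: divr_ge0; lra.
have ht1 : t <= 1.
  rewrite /t ler_pdivrMr // mul1r; lra.
have htd : (1 - t) * dotZ (a j) x0 + t * dotZ (a j) x1 = b j.
  rewrite /t; field; exact: hd.
clearbody t.
set x := (1 - t) *: x0 + t *: x1.
have hxj : dotZ (a j) x = b j.
  by rewrite /x dotZ_lin.
have hxP : Ppoly a b x.
  move=> k; rewrite subr0; case: (eqVneq k j) => [->|hkj]; first by rewrite hxj.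
  rewrite /x dotZ_lin.
  have e1 := ltW (hx0 k); have e2 := hx1 k hkj.
  have := ler_wpM2l (_ : 0 <= 1 - t) e1; have := ler_wpM2l ht0 e2.
  move=> q1 q2; lra.
have [k [p [lam [hl hs hp hx]]]] := hhull x hxP.
have hsum : \sum_t lam t * (b j - dotZ (a j) (intvec R (p t))) = 0.
  under eq_bigr do rewrite mulrBr.
  rewrite sumrB -mulr_suml hs mul1r -dotZ_sum -hx hxj; lra.
have hnn : forall i, true -> 0 <= lam i * (b j - dotZ (a j) (intvec R (p i))).
  move=> i _; apply: mulr_ge0 => //; rewrite subr_ge0.
  by have := hp i j; rewrite subr0.
have hz := psumr_eq0P hnn hsum.
case: (pickP (fun t => lam t != 0)) => [t0 ht0'|hn]; last first.
  move: hs; rewrite big1 => [|s _]; first by move=> /eqP; rewrite eq_sym oner_eq0.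
  by have := hn s => /negbFE/eqP.
move/eqP: (hz t0 isT); rewrite mulf_eq0 (negbTE ht0') /= subr_eq0 => /eqP ->.
exact: dotZ_int.
Qed.
Lemma mu_exists (R : archiRealFieldType) d m (A : 'I_m -> 'rV[int]_d) :
  (exists lam : 'I_m -> R, [/\ forall i, 0 <= lam i, exists i, lam i != 0
            & \sum_i lam i *: intvec R (A i) = 0]) ->
  exists nu : 'I_m -> int,
    (forall j, \sum_i (nu i)%:~R * (A i 0 j)%:~R = 0 :> R) /\ \sum_i (nu i)%:~R != 0 :> R.
Proof.
case=> lam [hl [i0 hi0] hsum].
pose M : 'M[rat]_(d, m) := \matrix_(j, i) (A i 0 j)%:~R.
pose u : 'rV[rat]_m := const_mx 1.
case: (boolP (u <= M)%MS) => hu.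
  exfalso; move/submxP: hu => [y hy].
  have h1 : forall i, 1 = \sum_j ratr (y 0 j) * (A i 0 j)%:~R :> R.
    move=> i; have := congr1 (fun N : 'rV[rat]_m => ratr (N 0 i) : R) hy.
    rewrite /u !mxE rmorph1 => e; apply: (eq_trans e).
    rewrite rmorph_sum; apply: eq_bigr => j _.
    by rewrite /M !mxE rmorphM rmorph_int.
  have hs0 : \sum_i lam i = 0.
    transitivity (\sum_i lam i * \sum_j ratr (y 0 j) * (A i 0 j)%:~R).
      by apply: eq_bigr => i _; rewrite -h1 mulr1.
    under eq_bigr do rewrite mulr_sumr.
    rewrite exchange_big /=; apply: big1 => j _.
    have := congr1 (fun N : 'rV[R]_d => N 0 j) hsum.
    rewrite summxE mxE => hj.
    transitivity (ratr (y 0 j) * \sum_k (lam k *: intvec R (A k)) 0 j); last first.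
      by rewrite hj mulr0.
    rewrite mulr_sumr; apply: eq_bigr => i _; rewrite !mxE /=; ring.
  have := @psumr_eq0P _ _ _ _ (fun i _ => hl i) hs0 i0 isT.
  by move/eqP; rewrite (negbTE hi0).
rewrite submxE in hu.
set C := cokermx M in hu.
have hMC : M *m C = 0 by exact: mulmx_coker.
case: (pickP (fun k => (u *m C) 0 k != 0)) => [k hk|hn]; last first.
  exfalso; move/negP: hu; apply; apply/eqP/matrixP => i k.
  rewrite (ord1 i); have := hn k => /negbFE/eqP ->; by rewrite mxE.
pose mu i := C i k.
have hmu1 : \sum_i mu i != 0.
  move: hk; rewrite mxE; congr (_ != _); apply: eq_bigr => i _.
  by rewrite /u mxE mul1r.
have hmu2 : forall j, \sum_i (A i 0 j)%:~R * mu i = 0.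
  move=> j; have := congr1 (fun N : 'M[rat]_(d, m) => N j k) hMC.
  rewrite !mxE => e; rewrite -[RHS]e; apply: eq_bigr => i _; by rewrite /M mxE.
pose D := \prod_i denq (mu i).
pose nu i := numq (mu i) * \prod_(i' | i' != i) denq (mu i').
have hnu : forall i, (nu i)%:~R = mu i * D%:~R :> rat.
  move=> i; rewrite /nu /D [X in _ * X%:~R](bigD1 i) //= !intrM numqE mulrA.
  done.
have hD : D%:~R != 0 :> rat.
  rewrite intr_eq0 /D; apply/prodf_neq0 => i _; exact: denq_neq0.
clearbody nu D.
exists nu; split.
  move=> j.
  have e : \sum_i (nu i)%:~R * (A i 0 j)%:~R = 0 :> rat.
    rewrite (_ : \sum_i _ = D%:~R * \sum_i (A i 0 j)%:~R * mu i); first by rewrite hmu2 mulr0.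
    rewrite mulr_sumr; apply: eq_bigr => i _; rewrite hnu; ring.
  have := congr1 (ratr : rat -> R) e; rewrite rmorph_sum rmorph0 => e'.
  rewrite -[RHS]e'; apply: eq_bigr => i _; by rewrite rmorphM !rmorph_int.
rewrite (_ : \sum_i _ = ratr (\sum_i (nu i)%:~R)); last first.
  by rewrite rmorph_sum; apply: eq_bigr => i _; rewrite rmorph_int.
rewrite fmorph_eq0 (_ : \sum_i _ = D%:~R * \sum_i mu i).
  by rewrite mulf_neq0.
rewrite mulr_sumr; apply: eq_bigr => i _; rewrite hnu; ring.
Qed.

Theorem lemma3p9 (R : archiRealFieldType) (d : nat) (alpha eps : R)
  (halpha : 0 < alpha) (heps : 0 < eps)
  (m : nat) (A : 'I_m -> 'rV[int]_d)
  (hprim : forall i, primitive (A i))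
  (hpos : exists lam : 'I_m -> R, [/\ forall i, 0 <= lam i, exists i, lam i != 0
            & \sum_i lam i *: intvec R (A i) = 0]) :
  exists L : seq R,
    forall (n : nat) (a : 'I_n -> 'rV[int]_d) (b : 'I_n -> R) (c0 : R),
      lattice_polytope_system a b ->
      alpha_canonical_fan a b alpha ->
      qcd_inv a b c0 ->
      (forall v, (exists i, A i = v) <-> in_Ncore a b c0 v) ->
      eps <= c0^-1 ->
      c0^-1 \in L.
Proof.
have [nu [hnu0 hS]] := @mu_exists R _ _ A hpos.
set S := \sum_i (nu i)%:~R : R in hS.
have hSp : 0 < `|S| by rewrite normr_gt0.
pose K := Num.Def.archi_bound (`|S| / eps).
have hK : `|S| / eps < K%:R by apply: archi_boundP; apply: divr_ge0 => //; exact: ltW.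
exists [seq `|S| / i%:R | i <- iota 0 K.+1].
move=> n a b c0 hsys hfan [hc0 [y hy] hmax] hcore heps'.
have hw : forall i, dotZ (A i) y + c0 \is a Num.int.
  move=> i; have [j [haj hj]] := (proj1 (hcore (A i))) (ex_intro _ i erefl).
  by rewrite -haj hj // subrK; exact: b_int hsys j.
have hk : c0 * S \is a Num.int.
  have -> : c0 * S = \sum_i (nu i)%:~R * (dotZ (A i) y + c0).
    under [RHS]eq_bigr do rewrite mulrDr.
    rewrite big_split /= -mulr_suml -/S mulrC.
    rewrite [X in _ = X + _](_ : _ = 0) ?add0r //.
    rewrite /dotZ; under eq_bigr do rewrite mulr_sumr.
    rewrite exchange_big /=; apply: big1 => j _.
    transitivity (y 0 j * \sum_i (nu i)%:~R * (A i 0 j)%:~R); last first.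
      by rewrite hnu0 mulr0.
    by rewrite mulr_sumr; apply: eq_bigr => i _; rewrite /=; ring.
  by apply: rpred_sum => i _; apply: rpredM; [exact: intr_int | exact: hw].
move/intrP: hk => [k hk].
have hkn : (`|k|%N)%:R = c0 * `|S| :> R.
  by rewrite natr_absz intr_norm -hk normrM gtr0_norm.
have hle : c0 * `|S| <= `|S| / eps.
  rewrite ler_pdivlMr //.
  have h1 : eps * c0 <= 1.
    have := ler_wpM2r (ltW hc0) heps'; rewrite mulVf ?gt_eqF //.
  have := ler_wpM2r (ltW hSp) h1; rewrite mul1r => h2.
  by move: h2; rewrite [eps * c0]mulrC mulrAC.
apply/mapP; exists `|k|%N.
  rewrite mem_iota add0n ltnS.
  have : (`|k|%N)%:R <= K%:R :> R by rewrite hkn; exact: (le_trans hle (ltW hK)).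
  by rewrite ler_nat.
rewrite hkn; field; apply/andP; split; rewrite gt_eqF //.
Qed.
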